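(* Let $f:\mathbb{R}^n\to\mathbb{R}$ be differentiable and pseudo-convex, with $\nabla f$ $L$-Lipschitz continuous, and assume the stationary set $X^*$ is non-empty. Then the sequence $\{x^k\}$ generated by Algorithm 2 (with $\nabla f(x^k)\ne0$ for all $k$) satisfies, for every $x^*\in X^*$ and every integer $K\ge1$, $$\frac1K\sum_{k=0}^{K-1}\|\nabla f(x^k)\|^2\le\frac{\|x^0-x^*\|^2}{K\kappa_2h_{\min}^2},$$ where $\kappa_2=2\beta-1-\beta^2\nu^2$ and $h_{\min}=\min\left\{\underline{h},\frac{\nu\theta}{\overline{h}\max\{L,1\}^2}\right\}$.
   Context: Pseudo-convex: $\nabla f$ pseudo-monotone, i.e. $\langle \nabla f(x),y-x\rangle\ge0\Rightarrow\langle\nabla f(y),y-x\rangle\ge0$ for all $x,y$. $X^*=\{x:\nabla f(x)=0\}$. Algorithm 2: parameters $0<\mu<\nu<1$, $0<\underline{h}<1\le\gamma_0^0\le\overline{h}$, $\theta\in(0,1)$, $\tau>1$, $\beta\in\left(\frac{1-\sqrt{1-\nu^2}}{\nu^2},1\right]$, starting point $x^0$. At iteration $k$: for $\gamma>0$ let $z^k(\gamma)=x^k-\gamma\nabla f(x^k)$ and $r_k(\gamma)=\gamma\|\nabla f(z^k(\gamma))-\nabla f(x^k)\|/\|z^k(\gamma)-x^k\|$; starting from $\gamma_0^k$, while $r_k(\gamma_l^k)>\nu$ set $\gamma_{l+1}^k=\gamma_l^k\theta\min\{1,1/r_k(\gamma_l^k)\}$; let $h_k$ be the first $\gamma_l^k$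 with $r_k(\gamma_l^k)\le\nu$. Then $z^k=x^k-h_k\nabla f(x^k)$, $x^{k+1}=x^k-h_k\big(\nabla f(x^k)-\beta(\nabla f(x^k)-\nabla f(z^k))\big)$, and $\gamma_0^{k+1}=\mathbf{P}_{[\underline{h},\overline{h}]}(\tau h_k)$ if $r_k(h_k)\le\mu$, else $\gamma_0^{k+1}=\mathbf{P}_{[\underline{h},\overline{h}]}(h_k)$, where $\mathbf{P}_{[a,b]}$ is projection onto $[a,b]$. *)

(* Defs.v *)
From HB Require Import structures.
From mathcomp Require Import all_boot all_order all_algebra.
From mathcomp Require Import all_classical all_reals all_analysis.
Set Implicit Arguments. Unset Strict Implicit. Unset Printing Implicit Defensive.
Import Order.TTheory GRing.Theory Num.Theory.
Import numFieldNormedType.Exports.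
Local Open Scope ring_scope.

Section Defs.
Variables (R : realType) (n : nat).
Local Notation vec := 'rV[R]_n.

Definition dot (u v : vec) : R := \sum_(i < n) u ord0 i * v ord0 i.
Definition enorm (u : vec) : R := Num.sqrt (dot u u).

Definition is_gradient (f : vec -> R) (g : vec -> vec) : Prop :=
  forall x, differentiable f x /\ forall h : vec, ('d f x : vec -> R) h = dot h (g x).

(* pseudo-monotonicity of the gradient (= pseudo-convexity of f) *)
Definition pseudo_monotone (g : vec -> vec) : Prop :=
  forall x y, 0 <= dot (g x) (y - x) -> 0 <= dot (g y) (y - x).

Definition lipschitz_with (L : R) (g : vec -> vec) : Prop :=
  forall x y, enorm (g x - g y) <= L * enorm (x - y).

Definition proj_itv (a b t : R) : R := Num.max a (Num.min b t).

Definition zk (g : vec -> vec) (x : vec) (gam : R) : vec := x - gam *: g x.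
Definition rk (g : vec -> vec) (x : vec) (gam : R) : R :=
  gam * enorm (g (zk g x gam) - g x) / enorm (zk g x gam - x).

Fixpoint bt (theta : R) (g : vec -> vec) (x : vec) (gam0 : R) (l : nat) : R :=
  match l with
  | O => gam0
  | S l' => let gl := bt theta g x gam0 l' in
            gl * theta * Num.min 1 (1 / rk g x gl)
  end.

Definition algorithm2 (g : vec -> vec) (mu nu hlo hhi theta tau beta : R)
  (x0 : vec) (x : nat -> vec) (h : nat -> R) (gam0 : nat -> R) : Prop :=
  x 0%N = x0 /\
  forall k : nat,
    (exists lk : nat,
        (forall l, (l < lk)%N -> nu < rk g (x k) (bt theta g (x k) (gam0 k) l)) /\
        rk g (x k) (bt theta g (x k) (gam0 k) lk) <= nu /\
        h k = bt theta g (x k) (gam0 k) lk) /\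
    x k.+1 = x k - h k *: (g (x k) - beta *: (g (x k) - g (zk g (x k) (h k)))) /\
    gam0 k.+1 = (if rk g (x k) (h k) <= mu then proj_itv hlo hhi (tau * h k)
                 else proj_itv hlo hhi (h k)).

End Defs.

(* Main.v *)
Require Import Defs.
From HB Require Import structures.
From mathcomp Require Import all_boot all_order all_algebra.
From mathcomp Require Import all_classical all_reals all_analysis.
From mathcomp Require Import ring lra.
Import Order.TTheory GRing.Theory Num.Theory.
Local Open Scope ring_scope.

Section H.
Variables (R : realType) (n : nat).
Implicit Types (u v w : 'rV[R]_n).

Lemma dotC u v : dot u v = dot v u.
Proof. by apply: eq_bigr => i _; rewrite mulrC. Qed.
Lemma dotDl u v w : dot (u + v) w = dot u w + dot v w.
Proof. by rewrite /dot -big_split; apply: eq_bigr => i _; rewrite !mxE mulrDl. Qed.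
Lemma dotZl c u v : dot (c *: u) v = c * dot u v.
Proof. by rewrite /dot mulr_sumr; apply: eq_bigr => i _; rewrite !mxE mulrA. Qed.
Lemma dotNl u v : dot (- u) v = - dot u v.
Proof. by rewrite -scaleN1r dotZl mulN1r. Qed.
Lemma dotBl u v w : dot (u - v) w = dot u w - dot v w.
Proof. by rewrite dotDl dotNl. Qed.
Lemma dotDr u v w : dot w (u + v) = dot w u + dot w v.
Proof. by rewrite dotC dotDl !(dotC w). Qed.
Lemma dotZr c u v : dot v (c *: u) = c * dot v u.
Proof. by rewrite dotC dotZl dotC. Qed.
Lemma dotBr u v w : dot w (u - v) = dot w u - dot w v.
Proof. by rewrite dotC dotBl !(dotC w). Qed.
Lemma dot0l v : dot 0 v = 0.
Proof. by rewrite -(scale0r (0 : 'rV[R]_n)) dotZl mul0r. Qed.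
Lemma dot_ge0 u : 0 <= dot u u.
Proof. by apply: sumr_ge0 => i _; rewrite -expr2 sqr_ge0. Qed.
Lemma dot_eq0 u : dot u u = 0 -> u = 0.
Proof.
move=> H; apply/rowP => i; rewrite mxE.
have Hp : forall j : 'I_n, xpredT j -> 0 <= u ord0 j * u ord0 j.
  by move=> j _; rewrite -expr2 sqr_ge0.
have := @psumr_eq0P _ _ xpredT (fun j => u ord0 j * u ord0 j) Hp H i isT.
rewrite ord1 => /eqP; rewrite mulf_eq0 orbb => /eqP //.
Qed.
Lemma enorm_sq u : enorm u ^+ 2 = dot u u.
Proof. by rewrite /enorm sqr_sqrtr // dot_ge0. Qed.
Lemma enorm_ge0 u : 0 <= enorm u.
Proof. exact: sqrtr_ge0. Qed.
Lemma enormZ c u : enorm (c *: u) = `|c| * enorm u.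
Proof.
rewrite /enorm dotZl dotZr mulrA -expr2 sqrtrM ?sqr_ge0 //.
by rewrite sqrtr_sqr.
Qed.
Lemma enorm_gt0 u : u != 0 -> 0 < enorm u.
Proof.
move=> Hu; rewrite /enorm sqrtr_gt0 lt_def dot_ge0 andbT.
by apply/eqP => /dot_eq0 H; rewrite H eqxx in Hu.
Qed.

Lemma rk_le (g : 'rV[R]_n -> 'rV[R]_n) L x gam :
  0 <= gam -> 0 <= L -> lipschitz_with L g -> rk g x gam <= gam * L.
Proof.
move=> Hg HL Hlip; rewrite /rk.
have := enorm_ge0 (zk g x gam - x); rewrite le_eqVlt => /orP [/eqP <-|HB].
  by rewrite invr0 mulr0 mulr_ge0.
rewrite ler_pdivrMr // -mulrA ler_wpM2l // Hlip.
Qed.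

Lemma descent (g : 'rV[R]_n -> 'rV[R]_n) xs x h nu beta :
  g xs = 0 -> pseudo_monotone g -> 0 < h -> beta <= 1 -> 0 <= beta -> 0 <= nu ->
  g x != 0 -> rk g x h <= nu ->
  dot (x - h *: (g x - beta *: (g x - g (zk g x h))) - xs)
      (x - h *: (g x - beta *: (g x - g (zk g x h))) - xs)
  <= dot (x - xs) (x - xs) - (2 * beta - 1 - beta ^+ 2 * nu ^+ 2) * h ^+ 2 * dot (g x) (g x).
Proof.
move=> Hxs Hpm Hh Hb1 Hb0 Hnu Hgx Hrk.
have H1 : 0 <= dot (g x) (x - xs).
  by apply: Hpm; rewrite Hxs dot0l.
have H2 : 0 <= dot (g (zk g x h)) (zk g x h - xs).
  by apply: Hpm; rewrite Hxs dot0l.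
have Hzx : zk g x h - x = (- h) *: g x.
  by rewrite /zk addrAC subrr add0r scaleNr.
have Hna := enorm_gt0 _ Hgx.
have H3 : enorm (g (zk g x h) - g x) <= nu * enorm (g x).
  move: Hrk; rewrite /rk Hzx enormZ normrN gtr0_norm // ler_pdivrMr ?mulr_gt0 //.
  by rewrite mulrA (mulrC nu) -mulrA ler_pM2l.
have H4 : dot (g (zk g x h) - g x) (g (zk g x h) - g x) <= nu ^+ 2 * dot (g x) (g x).
  rewrite -!enorm_sq -exprMn ler_pXn2r ?nnegrE ?mulr_ge0 ?enorm_ge0 //.
have E : zk g x h - xs = (x - xs) - h *: g x by rewrite /zk addrAC.
rewrite E in H2.
move: H1 H2 H4.
have -> : x - h *: (g x - beta *: (g x - g (zk g x h))) - xs =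
   (x - xs) - h *: (g x - beta *: (g x - g (zk g x h))) by rewrite addrAC.
set P := x - xs; set a := g x; set b := g (zk g x h); clearbody P a b.
rewrite !(dotBl, dotBr, dotZl, dotZr) ?(dotC b a) ?(dotC P a) ?(dotC P b).
move: (dot P P) (dot a P) (dot b P) (dot a a) (dot a b) (dot b b) => PP pa pb aa ab bb.
move=> H1 H2 H4.
have Hh0 : 0 <= h by exact: ltW.
have K1 : 0 <= 2 * h * (1 - beta) * pa.
  apply: mulr_ge0 => //; apply: mulr_ge0; [apply: mulr_ge0 => //| lra].
have K2 : 0 <= 2 * h * beta * (pb - h * ab).
  apply: mulr_ge0 => //; apply: mulr_ge0 => //; apply: mulr_ge0 => //.
have K3 : h ^+ 2 * beta ^+ 2 * (bb - ab - (ab - aa) - nu ^+ 2 * aa) <= 0.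
  apply: mulr_ge0_le0; [apply: mulr_ge0; exact: sqr_ge0 | lra].
nra.
Qed.
End H.

Theorem theorem4 (R : realType) (n : nat) (f : 'rV[R]_n -> R)
  (g : 'rV[R]_n -> 'rV[R]_n) (L : R)
  (mu nu hlo hhi theta tau beta : R) (x0 : 'rV[R]_n)
  (x : nat -> 'rV[R]_n) (h : nat -> R) (gam0 : nat -> R) :
  is_gradient f g ->
  pseudo_monotone g ->
  0 <= L -> lipschitz_with L g ->
  (exists xs, g xs = 0) ->
  0 < mu -> mu < nu -> nu < 1 ->
  0 < hlo -> hlo < 1 -> 1 <= gam0 0%N -> gam0 0%N <= hhi ->
  0 < theta -> theta < 1 -> 1 < tau ->
  (1 - Num.sqrt (1 - nu ^+ 2)) / nu ^+ 2 < beta -> beta <= 1 ->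
  algorithm2 g mu nu hlo hhi theta tau beta x0 x h gam0 ->
  (forall k, g (x k) != 0) ->
  forall xs, g xs = 0 ->
  forall K : nat, (1 <= K)%N ->
  let kappa2 := 2 * beta - 1 - beta ^+ 2 * nu ^+ 2 in
  let hmin := Num.min hlo (nu * theta / (hhi * (Num.max L 1) ^+ 2)) in
  K%:R^-1 * \sum_(k < K) enorm (g (x k)) ^+ 2
    <= enorm (x0 - xs) ^+ 2 / (K%:R * kappa2 * hmin ^+ 2).
Proof.
move=> Hgrad Hpm HL Hlip _ Hmu Hmunu Hnu1 Hlo Hlo1 Hg00 Hg0h Hth Hth1 Htau Hb Hb1
  [Hx0 Halg] Hgx xs Hxs K HK.
cbv zeta.
have nu0 : 0 < nu by lra.
have Hhhi : 1 <= hhi by lra.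
set M := Num.max L 1.
have HM1 : 1 <= M by rewrite le_max lexx orbT.
have HLM : L <= M by rewrite le_max lexx.
set c := hhi * M ^+ 2.
set kappa2 := 2 * beta - 1 - beta ^+ 2 * nu ^+ 2.
set hmin := Num.min hlo (nu * theta / c).
have Hc1 : M <= c.
  rewrite /c expr2 mulrA -{1}(mul1r M) ler_wpM2r //; first lra.
  by rewrite -{1}(mul1r 1) ler_pM.
have Hq : 0 < nu * theta / c.
  by rewrite divr_gt0 ?mulr_gt0 //; lra.
have Hhmin0 : 0 < hmin by rewrite /hmin lt_min Hlo Hq.
have Hgam : forall k, hlo <= gam0 k.
  case=> [|k]; first lra.
  have [_ [_ ->]] := Halg k.
  by case: ifP => _; rewrite /proj_itv le_max lexx.
have Hh : forall k, hmin <= h k.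
  move=> k; have [[lk [Hlt [Hle Hhk]]] _] := Halg k.
  have Hgl : forall l, (l <= lk)%N -> 0 < bt theta g (x k) (gam0 k) l.
    elim=> [|l IH] Hl /=; first by have := Hgam k; lra.
    have Hr := Hlt l Hl. have IH' := IH (ltnW Hl).
    apply: mulr_gt0; first exact: mulr_gt0.
    rewrite lt_min ltr01 /= divr_gt0 //; lra.
  move: Hlt Hle Hhk Hgl; case: lk => [|l] Hlt Hle Hhk Hgl.
    by rewrite Hhk /=; apply: le_trans (Hgam k); rewrite /hmin ge_min lexx.
  apply: le_trans (_ : nu * theta / c <= _); first by rewrite /hmin ge_min lexx orbT.
  move: Hhk => /= Hhk.
  set gl := bt theta g (x k) (gam0 k) l in Hhk.
  have Hgl0 : 0 < gl := Hgl l (leqnSn l).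
  have Hr : nu < rk g (x k) gl := Hlt l (ltnSn l).
  have Hrle := @rk_le _ _ g L (x k) gl (ltW Hgl0) HL Hlip.
  move: Hr Hrle Hhk; set r := rk g (x k) gl => Hr Hrle Hhk.
  have r0 : 0 < r by lra.
  set t := r^-1.
  have t0 : 0 < t by rewrite invr_gt0.
  have rt : r * t = 1 by rewrite mulfV // gt_eqF.
  have Hmin : nu * t <= Num.min 1 (1 / r).
    rewrite le_min mul1r; apply/andP; split.
      by rewrite -rt ler_wpM2r //; lra.
    by rewrite -[X in _ <= X](mul1r t) ler_wpM2r //; [exact: ltW | lra].
  have Hrc : r <= gl * c.
    apply: le_trans Hrle _; rewrite ler_wpM2l //; [exact: ltW | lra].
  rewrite ler_pdivrMr ?(lt_le_trans _ Hc1) ?(lt_le_trans _ HM1) // Hhk.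
  have X1 : theta * nu * t * r <= theta * nu * t * (gl * c).
    by rewrite ler_wpM2l // ?mulr_ge0 // ltW.
  have X2 : gl * theta * (nu * t) * c <= gl * theta * Num.min 1 (1 / r) * c.
    rewrite ler_wpM2r ?ler_wpM2l ?mulr_ge0 // ltW //; lra.
  have X3 : theta * nu * t * r = theta * nu by rewrite -mulrA (mulrC t) rt mulr1.
  lra.
set s := Num.sqrt (1 - nu ^+ 2).
have hs0 : 0 <= s by exact: sqrtr_ge0.
have hs2 : s ^+ 2 = 1 - nu ^+ 2 by rewrite sqr_sqrtr //; nra.
have Hs1 : s <= 1 by nra.
have nu2 : 0 < nu ^+ 2 by rewrite exprn_gt0.
have Hb' : 1 - s < beta * nu ^+ 2 by rewrite -ltr_pdivrMr.
have Hb0 : 0 <= beta.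
  by apply: le_trans (ltW Hb); apply: divr_ge0; [rewrite subr_ge0 | exact: ltW].
have Hk : 0 < kappa2.
  have P1 : 0 < (beta * nu ^+ 2 - 1 + s) * (1 + s - beta * nu ^+ 2).
    apply: mulr_gt0; first lra.
    have : beta * nu ^+ 2 <= nu ^+ 2 by rewrite -{2}(mul1r (nu ^+ 2)) ler_wpM2r // ltW.
    nra.
  have E : (beta * nu ^+ 2 - 1 + s) * (1 + s - beta * nu ^+ 2)
     = nu ^+ 2 * kappa2 + (s ^+ 2 - (1 - nu ^+ 2)) by rewrite /kappa2; ring.
  by move: P1; rewrite E hs2 subrr addr0 pmulr_rgt0.
have Hdesc : forall k, dot (x k.+1 - xs) (x k.+1 - xs)
   <= dot (x k - xs) (x k - xs) - kappa2 * h k ^+ 2 * dot (g (x k)) (g (x k)).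
  move=> k; have [[lk [_ [Hle Hhk]]] [-> _]] := Halg k.
  apply: descent => //; [exact: lt_le_trans Hhmin0 (Hh k) | exact: ltW nu0 | by rewrite Hhk].
have Hsum : forall N, kappa2 * hmin ^+ 2 * \sum_(k < N) dot (g (x k)) (g (x k))
   <= dot (x0 - xs) (x0 - xs) - dot (x N - xs) (x N - xs).
  elim=> [|N IH]; first by rewrite big_ord0 mulr0 Hx0 subrr.
  rewrite big_ord_recr /= mulrDr.
  have D := Hdesc N.
  have X : kappa2 * hmin ^+ 2 * dot (g (x N)) (g (x N))
       <= kappa2 * h N ^+ 2 * dot (g (x N)) (g (x N)).
    rewrite ler_wpM2r ?dot_ge0 // ler_wpM2l ?(ltW Hk) // !expr2; apply: ler_pM; [exact: ltW Hhmin0 | exact: ltW Hhmin0 | exact: Hh | exact: Hh].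
  lra.
have S := Hsum K.
have HDK := @dot_ge0 _ _ (x K - xs).
rewrite enorm_sq; under eq_bigr do rewrite enorm_sq.
have K0 : 0 < K%:R :> R by rewrite ltr0n.
rewrite ler_pdivlMr ?mulr_gt0 ?exprn_gt0 //.
move: S; set S0 := \sum_(k < K) _ => S.
have -> : K%:R^-1 * S0 * (K%:R * kappa2 * hmin ^+ 2) = kappa2 * hmin ^+ 2 * S0.
  by field; rewrite gt_eqF.
lra.
Qed.
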